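(* Let $R$ be a Dedekind domain with fraction field $K$ and let $C$ be a nonzero ideal of $R$. Let $E$ be the set of fractional ideals of $R$ in $K$ containing $R$, and define subsets $A_0\subseteq A_1\subseteq\cdots$ of $E$ by $A_0=\{R\}$ and, for $i>0$, $$A_i=A_{i-1}\cup\{I\in E:\ \forall x\in IC\setminus C\ \exists y\in C \text{ such that } (x-y)^{-1}IC\in A_{i-1}\}.$$ If $i\ge 1$ and $I\in A_i\setminus A_{i-1}$, then the ideal class of $I$ equals the ideal class of $C^{-i}$ in the class group of $R$.
   Context: $[J]$ denotes the class of a fractional ideal $J$ in the ideal class group of $R$. *)

(* Defs.v *)
From HB Require Import structures.
From mathcomp Require Import all_boot all_order all_algebra.
Set Implicit Arguments. Unset Strict Implicit. Unset Printing Implicit Defensive.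
Import Order.TTheory GRing.Theory Num.Theory.
Local Open Scope ring_scope.

(* Subsets of a field K are represented as predicates K -> Prop.
   All notions below are invariant under extensional equality. *)
Section Ideals.
Variable K : fieldType.
Implicit Types (R I J : K -> Prop).

Definition is_subring R : Prop :=
  [/\ R 0, R 1, (forall x y, R x -> R y -> R (x - y))
    & (forall x y, R x -> R y -> R (x * y))].

Definition is_frac_field R : Prop :=
  forall k : K, exists a b, [/\ R a, R b, b != 0 & k = a / b].

Definition set_eq I J : Prop := forall x, I x <-> J x.

Definition is_submodule R I : Prop :=
  [/\ I 0, (forall x y, I x -> I y -> I (x + y))
    & (forall r x, R r -> I x -> I (r * x))].

Definition frac_ideal R I : Prop :=
  [/\ is_submodule R I, (exists x, I x /\ x != 0)
    & exists d, [/\ R d, d != 0 & forall x, I x -> R (d * x)]].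

Definition nonzero_ideal R C : Prop :=
  [/\ is_submodule R C, (forall x, C x -> R x) & exists c, C c /\ c != 0].

Definition iprod I J : K -> Prop := fun z =>
  exists s : seq (K * K), (forall p, p \in s -> I p.1 /\ J p.2) /\
                          z = \sum_(p <- s) p.1 * p.2.

Definition fracinv R I : K -> Prop := fun x => forall y, I y -> R (x * y).

Fixpoint ipow R I (n : nat) : K -> Prop :=
  match n with 0 => R | n.+1 => iprod (ipow R I n) I end.

Definition iscale (a : K) I : K -> Prop := fun z => exists w, I w /\ z = a * w.

(* Dedekind domain: an integral domain (here a subring of its fraction field K)
   in which every nonzero fractional ideal is invertible. *)
Definition dedekind R : Prop :=
  [/\ is_subring R, is_frac_field R &
      forall I, frac_ideal R I -> set_eq (iprod I (fracinv R I)) R].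

Definition inEset R I : Prop := frac_ideal R I /\ (forall x, R x -> I x).

(* the sets A_i, as predicates on subsets of K (membership up to set equality) *)
Fixpoint inA R C (i : nat) (I : K -> Prop) : Prop :=
  match i with
  | 0 => set_eq I R
  | i'.+1 => inA R C i' I \/
      (inEset R I /\
       forall x, iprod I C x -> ~ C x ->
         exists y, C y /\ inA R C i' (iscale (x - y)^-1 (iprod I C)))
  end.

(* [I] = [J] in the ideal class group: I = aJ for some nonzero a in K *)
Definition same_class I J : Prop :=
  exists a : K, a != 0 /\ set_eq I (iscale a J).

End Ideals.

(* Main.v *)
Require Import Defs.
From Stdlib Require Import Classical.
From HB Require Import structures.
From mathcomp Require Import all_boot all_order all_algebra.
From mathcomp Require Import ring.
Import Order.TTheory GRing.Theory Num.Theory.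
Local Open Scope ring_scope.
Set Implicit Arguments. Unset Strict Implicit.

Section Aux.
Variable K : fieldType.
Implicit Types (R I J P C : K -> Prop).

Lemma sum_closed (Q : K -> Prop) (s : seq (K*K)) (f : K*K -> K) :
  Q 0 -> (forall a b, Q a -> Q b -> Q (a + b)) ->
  (forall q, q \in s -> Q (f q)) -> Q (\sum_(q <- s) f q).
Proof.
move=> Q0 QD; elim: s => [|q s IH] Hs; first by rewrite big_nil.
rewrite big_cons; apply: QD; first by apply: Hs; rewrite inE eqxx.
by apply: IH => r Hr; apply: Hs; rewrite inE Hr orbT.
Qed.

Lemma iprod1 I J u v : I u -> J v -> iprod I J (u * v).
Proof.
move=> Hu Hv; exists [:: (u, v)]; split.
  by move=> p; rewrite inE => /eqP ->.
by rewrite big_cons big_nil addr0.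
Qed.

Lemma subring_add R a b : is_subring R -> R a -> R b -> R (a + b).
Proof.
case=> R0 R1 RB RM Ha Hb.
have : R (a - (0 - b)) by apply RB => //; apply RB.
by rewrite sub0r opprK.
Qed.

Lemma one_in R C : dedekind R -> nonzero_ideal R C -> iprod C (fracinv R C) 1.
Proof.
case=> Rs Rf Rinv [Cs CR [c [Cc c0]]].
have FC : frac_ideal R C.
  split => //; first by exists c.
  exists 1; split => //; first by case: Rs.
    exact: oner_neq0.
  by move=> x Cx; rewrite mul1r; apply: CR.
apply (proj2 (Rinv C FC 1)). by case: Rs.
Qed.

Lemma key R C I P (x y a : K) :
  is_subring R -> is_submodule R I -> iprod C (fracinv R C) 1 ->
  x - y != 0 -> a != 0 ->
  set_eq (iscale (x - y)^-1 (iprod I C)) (iscale a P) ->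
  set_eq I (iscale ((x - y) * a) (iprod P (fracinv R C))).
Proof.
move=> Rs [I0 ID IM] [s1 [Hs1 E1]] e0 a0 HJ.
move: e0 HJ; set e := x - y => e0 HJ.
set c := e * a.
have L1 : forall w, iprod I C w -> exists p, P p /\ w = c * p.
  move=> w Hw.
  have [p [Pp Ep]] : iscale a P (e^-1 * w) by apply/HJ; exists w.
  exists p; split => //.
  by rewrite /c -mulrA -Ep mulrA mulfV // mul1r.
have L2 : forall p, P p -> iprod I C (c * p).
  move=> p Pp.
  have [w [Hw Ew]] : iscale e^-1 (iprod I C) (a * p) by apply/HJ; exists p.
  by rewrite /c -mulrA Ew mulrA mulfV // mul1r.
move=> u; split.
- move=> Iu.
  suff [t [Ht Et]] : exists t : seq (K*K),
      (forall q, q \in t -> P q.1 /\ fracinv R C q.2) /\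
      u * \sum_(q <- s1) q.1 * q.2 = c * \sum_(q <- t) q.1 * q.2.
    exists (\sum_(q <- t) q.1 * q.2); split; first by exists t.
    by rewrite -Et -E1 mulr1.
  clear E1.
  elim: s1 Hs1 => [|q s IH] Hs.
    by exists [::]; split; [move=> q; rewrite in_nil | rewrite !big_nil !mulr0].
  have Hs' : forall r, r \in s -> C r.1 /\ fracinv R C r.2.
    by move=> r Hr; apply: Hs; rewrite inE Hr orbT.
  have [t [Ht Et]] := IH Hs'.
  have [Cq1 Cq2] := Hs q (mem_head q s).
  have [p [Pp Ep]] := L1 _ (iprod1 Iu Cq1).
  exists ((p, q.2) :: t); split.
    move=> r; rewrite inE => /orP [/eqP -> | Hr]; [by split | exact: Ht].
  rewrite !big_cons /= mulrDr Et.
  have -> : u * (q.1 * q.2) = (u * q.1) * q.2 by ring.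
  rewrite Ep; ring.
- move=> [w [[t [Ht ->]] ->]].
  rewrite mulr_sumr.
  apply: sum_closed => [//|a1 b1|q Hq]; first exact: ID.
  have [Pq Cq] := Ht q Hq.
  have [s [Hs Es]] := L2 _ Pq.
  rewrite mulrA Es mulr_suml.
  apply: sum_closed => [//|a1 b1|r Hr]; first exact: ID.
  have [Ir Cr] := Hs r Hr.
  have -> : r.1 * r.2 * q.2 = (q.2 * r.2) * r.1 by ring.
  apply: IM; [exact: (Cq _ Cr) | exact: Ir].
Qed.

Lemma step R C I P x y a :
  dedekind R -> nonzero_ideal R C -> inEset R I -> iprod I C x -> ~ C x ->
  C y -> a != 0 ->
  set_eq (iscale (x - y)^-1 (iprod I C)) (iscale a P) ->
  same_class I (iprod P (fracinv R C)).
Proof.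
move=> D NC [[IS _ _] _] Ix Cx Cy a0 HJ.
have e0 : x - y != 0.
  apply/eqP => /eqP; rewrite subr_eq0 => /eqP Exy; apply: Cx; by rewrite Exy.
exists ((x - y) * a); split; first by rewrite mulf_neq0.
apply: key => //; [by case: D | exact: one_in].
Qed.

Lemma exists_out R C I : dedekind R -> nonzero_ideal R C -> inEset R I ->
  ~ set_eq I R -> exists x, iprod I C x /\ ~ C x.
Proof.
move=> D NC [FI RI] NE.
have Rs : is_subring R by case: D.
apply: NNPP => H; apply: NE => u; split => [Iu|]; last exact: RI.
have [s [Hs E1]] := one_in D NC.
rewrite -[u]mulr1 E1 mulr_sumr.
apply: sum_closed => [|a b|q Hq]; [by case: Rs | exact: subring_add |].
have [Cq1 Cq2] := Hs q Hq.
have Cu : C (u * q.1).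
  apply: NNPP => nC; apply: H; exists (u * q.1); split => //; exact: iprod1.
have := Cq2 _ Cu.
by have -> : u * (q.1 * q.2) = q.2 * (u * q.1) by ring.
Qed.

End Aux.

Theorem lemma2p3 (K : fieldType) (R : K -> Prop) (C : K -> Prop)
    (I : K -> Prop) (i : nat) :
  dedekind R -> nonzero_ideal R C -> (1 <= i)%N ->
  inA R C i I -> ~ inA R C i.-1 I ->
  same_class I (ipow R (fracinv R C) i).
Proof.
move=> D NC; case: i => [//|n] _.
elim: n I => [|n IH] I.
- move=> [H0|[EI HI]] N0; first by exfalso; exact: N0.
  have [x [Ix Cx]] := exists_out D NC EI N0.
  have [y [Cy Jy]] := HI x Ix Cx.
  apply: (step D NC EI Ix Cx Cy (oner_neq0 K)) => z.
  split => [Hz|[w [Rw ->]]].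
    by exists z; split; [exact: (proj1 (Jy z) Hz) | rewrite mul1r].
  by rewrite mul1r; exact: (proj2 (Jy w) Rw).
- move=> [Hn|[EI HI]] Nn; first by exfalso; exact: (Nn Hn).
  have [x [Ix [Cx Hx]]] : exists x, iprod I C x /\ ~ C x /\
      ~ (exists y, C y /\ inA R C n (iscale (x - y)^-1 (iprod I C))).
    apply: NNPP => H; apply: Nn; simpl; right; split => // x Ix Cx.
    apply: NNPP => H2; apply: H; by exists x.
  have [y [Cy Jy]] := HI x Ix Cx.
  have [a [a0 Ha]] := IH _ Jy (fun H => Hx (ex_intro _ y (conj Cy H))).
  exact: (step D NC EI Ix Cx Cy a0 Ha).
Qed.
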